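(* Let $G=(V,E)$ be a connected graph with positive edge costs $c:E\to\mathbb{R}_+$, let $\alpha\ge 1$, and let $(U,\complement{U})$ be an $\alpha$-approximate minimum cut of $G$. Then there exists a subset $S\subseteq U$ with $|S|\le\lfloor 2\alpha\rfloor+1$ such that $(U,\complement{U})$ is the unique minimum $(S,\complement{U})$-terminal cut.
   Context: A cut is a partition of $V$ into two non-empty parts; for $\emptyset\ne U\subsetneq V$ write $\complement{U}=V\setminus U$, $(U,\complement{U})$ for the corresponding cut, and $d(U)$ for the total cost of edges with exactly one endpoint in $U$. Let $\lambda=\min\{d(U):\emptyset\ne U\subsetneq V\}$. The cut $(U,\complement{U})$ is an $\alpha$-approximate minimum cut if $d(U)\le\alpha\lambda$. For disjoint non-empty $S,T\subseteq V$, a cut $(X,\complement{X})$ is an $(S,T)$-terminal cut if $S\subseteq X\subseteq V\setminus T$; a minimum $(S,T)$-terminal cut is one minimizing $d(X)$ among these. *)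

(* Defs.v *)
From mathcomp Require Import all_boot all_order all_algebra.
Set Implicit Arguments. Unset Strict Implicit. Unset Printing Implicit Defensive.
Import Order.TTheory GRing.Theory Num.Theory.
Local Open Scope ring_scope.

(* A finite simple graph on vertex set V: a symmetric irreflexive edge
   relation [e], with edge costs [c x y] for the edge {x,y}. *)
Definition simple_graph (V : finType) (e : rel V) : Prop :=
  irreflexive e /\ symmetric e.

Definition graph_connected (V : finType) (e : rel V) : Prop :=
  forall x y : V, connect e x y.

Definition pos_costs (R : numDomainType) (V : finType) (e : rel V)
  (c : V -> V -> R) : Prop :=
  (forall x y, c x y = c y x) /\ (forall x y, e x y -> 0 < c x y).

(* a cut side: nonempty proper subset *)
Definition is_cut (V : finType) (U : {set V}) : bool :=
  (U != set0) && (U != setT).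

Definition cut_cost (R : numDomainType) (V : finType) (e : rel V)
  (c : V -> V -> R) (U : {set V}) : R :=
  \sum_(x in U) \sum_(y in ~: U | e x y) c x y.

(* (U, ~U) is an alpha-approximate minimum cut: d(U) <= alpha * lambda,
   where lambda is the minimum of d(W) over all cuts W. *)
Definition approx_min_cut (R : numDomainType) (V : finType) (e : rel V)
  (c : V -> V -> R) (alpha : R) (U : {set V}) : Prop :=
  is_cut U /\
  forall W : {set V}, is_cut W -> cut_cost e c U <= alpha * cut_cost e c W.

Definition terminal_cut (V : finType) (S T X : {set V}) : bool :=
  (S \subset X) && (X \subset ~: T).

Definition unique_min_terminal_cut (R : numDomainType) (V : finType)
  (e : rel V) (c : V -> V -> R) (S T U : {set V}) : Prop :=
  [/\ S != set0, T != set0, [disjoint S & T],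
      terminal_cut S T U &
      forall X : {set V}, terminal_cut S T X -> X != U ->
        cut_cost e c U < cut_cost e c X].

(* Main.v *)
Require Import Defs.
From mathcomp Require Import all_boot all_order all_algebra.
From mathcomp Require Import zify.
Import Order.TTheory GRing.Theory Num.Theory.
Local Open Scope ring_scope.

Set Implicit Arguments. Unset Strict Implicit. Unset Printing Implicit Defensive.

Lemma cut_costE (R : numDomainType) (V : finType) (e : rel V) (c : V -> V -> R)
  (A : {set V}) :
  cut_cost e c A =
  \sum_x \sum_y (if e x y then c x y else 0) *+ ((x \in A) && (y \notin A)).
Proof.
rewrite /cut_cost [RHS](bigID (fun x => x \in A)) /=.
rewrite [X in _ = _ + X]big1 ?addr0; last first.
  by move=> x /negbTE xA; apply: big1 => y _; rewrite xA mulr0n.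
apply: eq_bigr => x xA; rewrite big_mkcond /=; apply: eq_bigr => y _.
by rewrite in_setC xA /=; case: (y \in A); case: (e x y); rewrite ?mulr1n ?mulr0n.
Qed.

Lemma sum_cut (R : numDomainType) (V : finType) (e : rel V) (c : V -> V -> R)
  (I : Type) (r : seq I) (P : pred I) (F : I -> {set V}) :
  \sum_(i <- r | P i) cut_cost e c (F i) =
  \sum_x \sum_y (if e x y then c x y else 0) *+
     \sum_(i <- r | P i) ((x \in F i) && (y \notin F i)).
Proof.
under eq_bigr do rewrite cut_costE.
rewrite exchange_big; apply: eq_bigr => x _; rewrite exchange_big.
by apply: eq_bigr => y _; rewrite sumrMnr.
Qed.

Lemma sym_le (R : numDomainType) (V : finType) (w : V -> V -> R)
  (f g : V -> V -> nat) :
  (forall x y, w x y = w y x) -> (forall x y, 0 <= w x y) ->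
  (forall x y, f x y + f y x <= g x y + g y x)%N ->
  \sum_x \sum_y w x y *+ f x y <= \sum_x \sum_y w x y *+ g x y.
Proof.
move=> ws w0 fg.
have E (h : V -> V -> nat) : (\sum_x \sum_y w x y *+ h x y) *+ 2 =
    \sum_x \sum_y w x y *+ (h x y + h y x).
  rewrite mulr2n [X in _ + X = _]exchange_big /= -big_split /=.
  apply: eq_bigr => x _; rewrite -big_split /=; apply: eq_bigr => y _.
  by rewrite [w y x]ws mulrnDr.
suff: (\sum_x \sum_y w x y *+ f x y) *+ 2 <= (\sum_x \sum_y w x y *+ g x y) *+ 2.
  by rewrite lerMn2r.
rewrite !E; apply: ler_sum => x _; apply: ler_sum => y _.
by apply: (ler_wpMn2l (w0 x y)); apply: fg.
Qed.

Lemma zsum_eq a b n : (a <= b)%N ->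
  (\sum_(3 <= j < n.+3) ((a < j) != (b < j) : nat) = minn n.+2 b - maxn a 2)%N.
Proof.
move=> ab; elim: n => [|n IH]; first by rewrite big_geq //; lia.
rewrite big_nat_recr //= IH.
have [h1|h1] := ltnP a n.+3; have [h2|h2] := ltnP b n.+3 => /=; lia.
Qed.

Lemma zsum_le a b n :
  (\sum_(3 <= j < n) ((a < j) != (b < j) : nat) <= maxn a b - maxn (minn a b) 2)%N.
Proof.
wlog ab : a b / (a <= b)%N.
  move=> H; case/orP: (leq_total a b) => h; first exact: H.
  rewrite (eq_bigr (fun j => ((b < j) != (a < j) : nat))%N); last first.
    by move=> j _; rewrite eq_sym.
  by rewrite maxnC minnC; apply: H.
case: n => [|[|[|m]]]; try by rewrite big_geq.
rewrite zsum_eq //; lia.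
Qed.

Lemma sum_in (V : finType) (S A : {set V}) : A \subset S ->
  (\sum_(s in S) (s \in A : nat) = #|A|)%N.
Proof.
move=> AS; rewrite -sum1_card [RHS]big_mkcond [LHS]big_mkcond /=.
apply: eq_bigr => s _; case: (boolP (s \in A)) => sA.
  by rewrite (subsetP AS s sA).
by case: (s \in S).
Qed.

Lemma sing_sum (V : finType) (S M : {set V}) :
  (\sum_(s in S) (M == [set s] : nat) <= (#|M| == 1%N))%N.
Proof.
case: (boolP (#|M| == 1%N)) => [/cards1P [m ->]| h].
  apply: (@leq_trans (\sum_s (m == s : nat))).
    rewrite [X in (X <= _)%N]big_mkcond; apply: leq_sum => s _.
    by rewrite (inj_eq set1_inj); case: (s \in S).
  rewrite (bigD1 m) //= eqxx big1 // => s /negbTE.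
  by rewrite eq_sym => ->.
rewrite big1 // => s _; case: eqP => // Ms.
by move: h; rewrite Ms cards1.
Qed.

Lemma key_comb (V : finType) (S M N : {set V}) n : M \subset S -> N \subset S ->
  (\sum_(s in S) ((M == [set s]) != (N == [set s]) : nat) +
   \sum_(3 <= j < n) ((#|M| < j) != (#|N| < j) : nat) <=
   \sum_(s in S) ((s \in M) != (s \in N) : nat))%N.
Proof.
move=> MS NS.
have [<-|MN] := eqVneq M N.
  by rewrite !big1 // => *; rewrite eqxx.
have -> : (\sum_(s in S) ((s \in M) != (s \in N) : nat) =
    \sum_(s in S) ((s \in M :\: N : nat) + (s \in N :\: M)))%N.
  by apply: eq_bigr => s _; rewrite !inE; case: (s \in M); case: (s \in N).
rewrite big_split /= !sum_in; last 2 first.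
- exact: subset_trans (subsetDl _ _) NS.
- exact: subset_trans (subsetDl _ _) MS.
rewrite !cardsD [N :&: M]setIC.
have p1 : (\sum_(s in S) ((M == [set s]) != (N == [set s]) : nat) <=
    (#|M| == 1%N) + (#|N| == 1%N))%N.
  apply: leq_trans (leq_add (sing_sum S M) (sing_sum S N)).
  rewrite -big_split /=; apply: leq_sum => s _.
  by case: (M == [set s]); case: (N == [set s]).
have z1 := zsum_le #|M| #|N| n.
have i1 : (#|M :&: N| <= #|M|)%N by apply: subset_leq_card; apply: subsetIl.
have i2 : (#|M :&: N| <= #|N|)%N by apply: subset_leq_card; apply: subsetIr.
have i3 : (#|M :&: N| < #|M|)%N \/ (#|M :&: N| < #|N|)%N.
  case: (ltnP #|M :&: N| #|M|) => h1; first by left.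
  case: (ltnP #|M :&: N| #|N|) => h2; first by right.
  exfalso; move/eqP: MN; apply.
  have /eqP e1 : M :&: N == M by rewrite eqEcard subsetIl.
  have /eqP e2 : M :&: N == N by rewrite eqEcard subsetIr.
  by rewrite -e1 -{2}e2.
move: p1 z1 i1 i2 i3.
case: (eqVneq #|M| 1%N) => hM; case: (eqVneq #|N| 1%N) => hN /=; lia.
Qed.

Lemma pair_sum (V : finType) (I : Type) (r : seq I) (Q : pred I)
  (F : I -> {set V}) x y :
  (\sum_(i <- r | Q i) ((x \in F i) && (y \notin F i) : nat) +
   \sum_(i <- r | Q i) ((y \in F i) && (x \notin F i) : nat) =
   \sum_(i <- r | Q i) ((x \in F i) != (y \in F i) : nat))%N.
Proof.
rewrite -big_split; apply: eq_bigr => i _.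
by case: (x \in F i); case: (y \in F i).
Qed.

Theorem theorem2p1 (R : archiRealFieldType) (V : finType) (e : rel V)
    (c : V -> V -> R) (alpha : R) (U : {set V}) :
  simple_graph e -> graph_connected e -> pos_costs e c ->
  1 <= alpha -> approx_min_cut e c alpha U ->
  exists S : {set V},
    [/\ S \subset U,
        (#|S|%:Z <= Num.floor (2 * alpha) + 1)%R &
        unique_min_terminal_cut e c S (~: U) U].
Proof.
move=> [eirr esym] conn [csym cpos] alpha1 [Ucut Uapx].
set d := cut_cost e c.
have w0 : forall x y, 0 <= (if e x y then c x y else 0).
  by move=> x y; case: ifP => // /cpos /ltW.
have ws : forall x y, (if e x y then c x y else 0) = (if e y x then c y x else 0).
  by move=> x y; rewrite esym csym.
have /andP [U0 UT] := Ucut.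
have [y0 y0U] : exists y, y \notin U.
  have : ~~ ([set: V] \subset U).
    by apply: contra UT => TU; rewrite eqEsubset subsetT TU.
  by case/subsetPn => y _ yU; exists y.
have dpos : forall A, is_cut A -> 0 < d A.
  move=> A /andP [A0 AT].
  case: (pickP (fun p : V * V => [&& p.1 \in A, p.2 \notin A & e p.1 p.2])).
    move=> [x y] /and3P [/= xA yA exy].
    rewrite /d /cut_cost (bigD1 x) //= (bigD1 y) /=; last by rewrite in_setC yA exy.
    apply: (lt_le_trans (cpos _ _ exy)); rewrite -addrA lerDl addr_ge0 //.
      by apply: sumr_ge0 => z /andP [/andP [_ /cpos /ltW]].
    apply: sumr_ge0 => z _; apply: sumr_ge0 => t /andP [_ /cpos /ltW] //.
  move=> H; exfalso.
  have cl : closed e A.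
    move=> u v euv.
    case uA: (u \in A); case vA: (v \in A) => //.
      by move: (H (u, v)); rewrite /= uA vA euv.
    by move: (H (v, u)); rewrite /= uA vA esym euv.
  have /set0Pn [x xA] := A0.
  have [y yA] : exists y, y \notin A.
    have : ~~ ([set: V] \subset A).
      by apply: contra AT => TA; rewrite eqEsubset subsetT TA.
    by case/subsetPn => y _ yA; exists y.
  by move: (closed_connect cl (conn x y)); rewrite xA (negbTE yA).
have dU0 : 0 < d U := dpos U Ucut.
pose valid (S : {set V}) := [&& S != set0, S \subset U &
  [forall X : {set V}, [&& S \subset X, X \subset U & X != U] ==> (d U < d X)]].
have validU : valid U.
  rewrite /valid U0 subxx /=; apply/forallP => X; apply/implyP.
  move=> /and3P [UX XU XnU]; case/eqP: XnU; apply/eqP.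
  by rewrite eqEsubset XU UX.
have valid_ok S : valid S -> unique_min_terminal_cut e c S (~: U) U.
  move=> /and3P [S0 SU /forallP H]; split => //.
  - apply/set0Pn; exists y0; by rewrite in_setC.
  - by rewrite disjoints_subset setCK.
  - by rewrite /terminal_cut setCK SU subxx.
  move=> X /andP [SX]; rewrite setCK => XU XnU.
  by move: (H X); rewrite SX XU XnU.
have [S0 vS0 minS0] := @arg_minnP _ U valid (fun S => #|S|) validU.
exists S0; have /and3P [S00 S0U _] := vS0.
split => //; last exact: valid_ok.
have f0 : 0 <= Num.floor (2 * alpha).
  by rewrite floor_ge0 mulr_ge0 // (le_trans ler01 alpha1).
case: (leqP #|S0| 1) => [k1|k2].
  apply: (@le_trans _ _ 1%:Z); first by rewrite lez_nat.
  by rewrite lerDr.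

set k := #|S0|.
have notv : forall s, s \in S0 -> ~~ valid (S0 :\ s).
  move=> s sS; apply/negP => v; have := minS0 _ v.
  by rewrite (cardsD1 s S0) sS add1n ltnn.
have exX : forall s, s \in S0 ->
    exists X : {set V}, [&& S0 :\ s \subset X, X \subset U, X != U & d X <= d U].
  move=> s sS; have := notv s sS; rewrite /valid.
  have -> : (S0 :\ s != set0).
    by rewrite -card_gt0; move: k2; rewrite /k (cardsD1 s S0) sS add1n ltnS.
  rewrite (subset_trans (subD1set S0 s) S0U) /= => /forallPn [X].
  rewrite negb_imply => /andP [/and3P [h1 h2 h3] h4].
  by exists X; rewrite h1 h2 h3 /= leNgt.
pose Xs s := odflt set0 [pick X : {set V} | [&& S0 :\ s \subset X, X \subset U, X != U & d X <= d U]].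
have XsP : forall s, s \in S0 ->
    [&& S0 :\ s \subset Xs s, Xs s \subset U, Xs s != U & d (Xs s) <= d U].
  move=> s sS; rewrite /Xs; case: pickP => [X -> //| H].
  by have [X hX] := exX s sS; move: (H X); rewrite hX.
have sXs : forall s, s \in S0 -> s \notin Xs s.
  move=> s sS; apply/negP => sX; have /and4P [h1 h2 h3 h4] := XsP s sS.
  have SX : S0 \subset Xs s.
    apply/subsetP => t tS; case: (eqVneq t s) => [-> //| ts].
    by apply: (subsetP h1); rewrite !inE ts tS.
  move/and3P: vS0 => [_ _ /forallP /(_ (Xs s))]; rewrite SX h2 h3 /= => H.
  by move: H; rewrite ltNge h4.
have tXs : forall s t, s \in S0 -> t \in S0 -> t != s -> t \in Xs s.
  move=> s t sS tS ts; have /and4P [h1 _ _ _] := XsP s sS.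
  by apply: (subsetP h1); rewrite !inE ts tS.
have XsU : forall s, s \in S0 -> Xs s \subset U.
  by move=> s sS; have /and4P [_ h _ _] := XsP s sS.
pose Mv v := [set t in S0 | v \notin Xs t].
have MvS : forall v, Mv v \subset S0.
  by move=> v; apply/subsetP => t; rewrite inE => /andP [].
have Mvs : forall s, s \in S0 -> Mv s = [set s].
  move=> s sS; apply/setP => t; rewrite !inE; case: (eqVneq t s) => [->|ts].
    by rewrite sS sXs.
  case tS: (t \in S0) => //=.
  by rewrite (tXs t s tS sS) // eq_sym.
have MvO : forall v, v \notin U -> Mv v = S0.
  move=> v vU; apply/setP => t; rewrite inE; case tS: (t \in S0) => //=.
  apply/negP => vX; move: vU; by rewrite (subsetP (XsU t tS) v vX).
pose P s := [set v | Mv v == [set s]].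
pose Z j := [set v | (#|Mv v| < j)%N].
have Pcut : forall s, s \in S0 -> is_cut (P s).
  move=> s sS; apply/andP; split.
    by apply/set0Pn; exists s; rewrite /P inE Mvs ?eqxx.
  apply/negP => /eqP PT.
  have : y0 \in P s by rewrite PT inE.
  rewrite /P inE MvO // => /eqP h; move: k2; by rewrite /k h cards1.
have dP : forall s, s \in S0 -> d U <= alpha * d (P s).
  by move=> s sS; apply: Uapx; apply: Pcut.
have dZ : forall j, (3 <= j < k.+1)%N -> d U <= d (Z j).
  move=> j /andP [j3 jk].
  have SZ : S0 \subset Z j.
    by apply/subsetP => s sS; rewrite /Z inE Mvs // cards1; apply: leq_trans j3.
  have ZU : Z j \subset U.
    apply/subsetP => v; rewrite /Z inE; apply: contraLR => vU.
    by rewrite MvO // -leqNgt -ltnS.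
  case: (eqVneq (Z j) U) => [->|ZnU]; first by [].
  apply: ltW; move/and3P: vS0 => [_ _ /forallP /(_ (Z j))].
  by rewrite SZ ZU ZnU.
have dX : forall s, s \in S0 -> d (Xs s) <= d U.
  by move=> s sS; have /and4P [_ _ _ h] := XsP s sS.
have key : \sum_(s in S0) d (P s) + \sum_(3 <= j < k.+1) d (Z j) <=
           \sum_(s in S0) d (Xs s).
  rewrite /d !sum_cut -big_split /=.
  under eq_bigr do rewrite -big_split /=.
  under eq_bigr do under eq_bigr do rewrite -mulrnDr.
  apply: sym_le => // x y.
  set cP := fun x y => (\sum_(s in S0) ((x \in P s) && (y \notin P s) : nat))%N.
  rewrite addnACA pair_sum pair_sum pair_sum.
  have -> : (\sum_(s in S0) ((x \in P s) != (y \in P s) : nat) =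
      \sum_(s in S0) ((Mv x == [set s]) != (Mv y == [set s]) : nat))%N.
    by apply: eq_bigr => s _; rewrite /P !inE.
  have -> : (\sum_(3 <= j < k.+1) ((x \in Z j) != (y \in Z j) : nat) =
      \sum_(3 <= j < k.+1) ((#|Mv x| < j) != (#|Mv y| < j) : nat))%N.
    by apply: eq_bigr => j _; rewrite /Z !inE.
  have -> : (\sum_(s in S0) ((x \in Xs s) != (y \in Xs s) : nat) =
      \sum_(s in S0) ((s \in Mv x) != (s \in Mv y) : nat))%N.
    apply: eq_bigr => s sS; rewrite /Mv !inE sS /=.
    by case: (x \in Xs s); case: (y \in Xs s).
  exact: key_comb.
have sumX : \sum_(s in S0) d (Xs s) <= d U *+ k.
  rewrite /k -sumr_const; apply: ler_sum => s sS; exact: dX.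
have sumZ : d U *+ (k.+1 - 3) <= \sum_(3 <= j < k.+1) d (Z j).
  rewrite -sumr_const_nat; apply: ler_sum_nat => j hj; exact: dZ.
have sumP : d U *+ k <= alpha * \sum_(s in S0) d (P s).
  rewrite mulr_sumr /k -sumr_const; apply: ler_sum => s sS; exact: dP.
have h1 : \sum_(s in S0) d (P s) <= d U *+ 2.
  have E : k = ((k.+1 - 3) + 2)%N by rewrite subSS subnK.
  have := le_trans (lerD (lexx (\sum_(s in S0) d (P s))) sumZ) (le_trans key sumX).
  by rewrite [in X in _ <= X]E mulrnDr [X in _ <= X]addrC lerD2r.
have a0 : 0 <= alpha by apply: le_trans ler01 alpha1.
have h2 : d U *+ k <= alpha * (d U *+ 2) := le_trans sumP (ler_wpM2l a0 h1).
have h3 : (k%:R : R) <= 2 * alpha.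
  move: h2; rewrite -[d U *+ k]mulr_natr -[d U *+ 2]mulr_natr mulrCA ler_pM2l //.
  by rewrite mulrC.
apply: (@le_trans _ _ (Num.floor (2 * alpha))); last by rewrite lerDl.
by rewrite floor_ge_int pmulrn.
Qed.
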